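(* Let $f:\mathbb{N}\to\mathbb{R}$ with $f(1)=1$ be multiplicative (i.e. $f(mn)=f(m)f(n)$ for coprime $m,n$). Assume there exist $A>0$ and $c\in(0,1)$ such that $|f(n)|\leq Ac^n$ for all $n\geq2$. Then $|f^{-1}(n)| \leq n^{\frac{3\ln c}{\ln 3}+\frac{\ln(1+A)}{\ln 2}}$ for all $n\geq2$.
   Context: $f^{-1}$ denotes the Dirichlet inverse of $f$: the arithmetic function with $\sum_{d\mid n} f(n/d) f^{-1}(d)=\varepsilon(n)$ for all $n$, where $\varepsilon(1)=1$ and $\varepsilon(n)=0$ for $n\ge2$. *)

(* Defs.v *)
From HB Require Import structures.
From mathcomp Require Import all_boot all_order all_algebra.
From mathcomp Require Import reals exp.
Set Implicit Arguments. Unset Strict Implicit. Unset Printing Implicit Defensive.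
Import Order.TTheory GRing.Theory Num.Theory.
Local Open Scope ring_scope.

(* Arithmetic functions are modelled as f : nat -> R; the value at 0 is
   irrelevant (never used). *)

Definition multiplicative_fn (R : realType) (f : nat -> R) : Prop :=
  f 1%N = 1 /\
  forall m n : nat, (0 < m)%N -> (0 < n)%N -> coprime m n ->
    f (m * n)%N = f m * f n.

Definition dirichlet_inverse (R : realType) (f g : nat -> R) : Prop :=
  forall n : nat, (0 < n)%N ->
    \sum_(d <- divisors n) f (n %/ d)%N * g d = (n == 1%N)%:R.

(* Main.v *)
Require Import Defs.
From HB Require Import structures.
From mathcomp Require Import all_boot all_order all_algebra.
From mathcomp Require Import reals exp.
From mathcomp Require Import zify ring lra.
Import Order.TTheory GRing.Theory Num.Theory.

Lemma divisors_mul_perm m n : 0 < m -> 0 < n -> coprime m n ->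
  perm_eq (divisors (m * n)) [seq a * b | a <- divisors m, b <- divisors n].
Proof.
move=> m0 n0 cmn; apply: uniq_perm; first exact: divisors_uniq.
  apply: allpairs_uniq; try exact: divisors_uniq.
  move=> [a1 b1] [a2 b2] /allpairsP[[x1 y1] [/= x1m y1n [-> ->]]].
  move=> /allpairsP[[x2 y2] [/= x2m y2n [-> ->]]] /= E.
  move: x1m y1n x2m y2n; rewrite -!dvdn_divisors // => x1m y1n x2m y2n.
  have ga : forall x y, x %| m -> y %| n -> gcdn m (x * y) = x.
    move=> x y xm yn; rewrite Gauss_gcdl ?(coprime_dvdr yn cmn) //.
    by apply/gcdn_idPr.
  have gb : forall x y, x %| m -> y %| n -> gcdn n (x * y) = y.
    have cnm : coprime n m by rewrite coprime_sym.
    move=> x y xm yn; rewrite mulnC Gauss_gcdl ?(coprime_dvdr xm cnm) //.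
    by apply/gcdn_idPr.
  have e1 : x1 = x2 by rewrite -(ga x1 y1) // E ga.
  have e2 : y1 = y2 by rewrite -(gb x1 y1) // E gb.
  by rewrite e1 e2.
move=> d; rewrite -dvdn_divisors ?muln_gt0 ?m0 //; apply/idP/allpairsP.
  move=> dmn.
  have d0 : 0 < d by apply: dvdn_gt0 dmn; rewrite muln_gt0 m0.
  set a := gcdn d m.
  have a0 : 0 < a by rewrite gcdn_gt0 d0.
  have ad : a %| d by apply: dvdn_gcdl.
  have am : a %| m by apply: dvdn_gcdr.
  exists (a, d %/ a); split => /=.
  - by rewrite -dvdn_divisors.
  - rewrite -dvdn_divisors //.
    have cop : coprime (d %/ a) (m %/ a).
      have : a * gcdn (d %/ a) (m %/ a) == a * 1.
        by rewrite muln1 muln_gcdr ![a * _]mulnC !divnK.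
      by rewrite eqn_pmul2l.
    rewrite -(Gauss_dvdr _ cop).
    rewrite -(@dvdn_pmul2l a) // mulnA ![a * (_ %/ a)]mulnC !divnK //. 
  - by rewrite mulnC divnK.
move=> [[a b] [/= am bn ->]].
by apply: dvdn_mul; rewrite dvdn_divisors.
Qed.

Local Open Scope ring_scope.
Lemma sum_divisors_mul (R : nmodType) m n (F : nat -> R) : (0 < m)%N -> (0 < n)%N -> coprime m n ->
  \sum_(d <- divisors (m * n)%N) F d = \sum_(a <- divisors m) \sum_(b <- divisors n) F (a * b)%N.
Proof.
move=> m0 n0 cmn; rewrite (perm_big _ (@divisors_mul_perm m n m0 n0 cmn)).
by rewrite big_allpairs_dep.
Qed.

Local Close Scope ring_scope.
Lemma divisors_pexp_perm p k : prime p ->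
  perm_eq (divisors (p ^ k)) [seq p ^ j | j <- iota 0 k.+1].
Proof.
move=> pp; have p1 := prime_gt1 pp.
apply: uniq_perm; first exact: divisors_uniq.
  by rewrite map_inj_uniq ?iota_uniq //; apply: expnI.
move=> d; rewrite -dvdn_divisors ?expn_gt0 ?prime_gt0 //.
apply/idP/mapP.
  by move=> /(dvdn_pfactor _ _ pp)[j jk ->]; exists j; rewrite // mem_iota ltnS jk.
by move=> [j]; rewrite mem_iota ltnS => /andP[_ jk] ->; apply/dvdn_pfactor => //; exists j.
Qed.

Local Open Scope ring_scope.

Lemma inv_one (R : realType) (f g : nat -> R) :
  f 1%N = 1 -> dirichlet_inverse f g -> g 1%N = 1.
Proof.
move=> f1 H; have := H 1%N isT.
have -> : divisors 1 = [:: 1%N] by [].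
by rewrite big_seq1 divnn /= f1 mul1r.
Qed.

Lemma inv_mult (R : realType) (f g : nat -> R) :
  multiplicative_fn f -> dirichlet_inverse f g ->
  forall m n, (0 < m)%N -> (0 < n)%N -> coprime m n -> g (m * n)%N = g m * g n.
Proof.
move=> [f1 fM] H.
have g1 := @inv_one R f g f1 H.
suff : forall N m n, (m * n <= N)%N -> (0 < m)%N -> (0 < n)%N -> coprime m n ->
  g (m * n)%N = g m * g n by move=> S m n; apply: S (leqnn _).
elim=> [|N IH] m n.
  by move=> mn m0 n0; exfalso; move: mn; rewrite leqn0 muln_eq0; case/orP=> /eqP E;
     [move: m0 | move: n0]; rewrite E.
move=> mnN m0 n0 cmn.
have [->|m1] := eqVneq m 1%N; first by rewrite mul1n g1 mul1r.
have [->|n1] := eqVneq n 1%N; first by rewrite muln1 g1 mulr1.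
have zero : forall k, (0 < k)%N -> k != 1%N -> \sum_(d <- divisors k) f (k %/ d)%N * g d = 0.
  by move=> k k0 k1; rewrite H // (negbTE k1).
have := zero (m * n)%N; rewrite muln_gt0 m0 n0 => /(_ isT).
have -> : (m * n != 1)%N by rewrite muln_eq1 negb_and m1.
move=> /(_ isT).
rewrite sum_divisors_mul //.
set X := g (m * n)%N - g m * g n.
have key : forall a b, a \in divisors m -> b \in divisors n ->
    f ((m * n) %/ (a * b))%N * g (a * b)%N =
    f (m %/ a)%N * g a * (f (n %/ b)%N * g b) + ((a == m) && (b == n))%:R * X.
  move=> a b; rewrite -!dvdn_divisors // => am bn.
  have a0 : (0 < a)%N by apply: dvdn_gt0 am.
  have b0 : (0 < b)%N by apply: dvdn_gt0 bn.
  have e : ((m * n) %/ (a * b) = (m %/ a) * (n %/ b))%N.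
    rewrite -{1}(divnK am) -{1}(divnK bn) mulnACA mulnK //.
    by rewrite muln_gt0 a0.
  have cq : coprime (m %/ a) (n %/ b).
    apply: (coprime_dvdl (n := m)); first by rewrite -{2}(divnK am) dvdn_mulr.
    apply: (coprime_dvdr (n := n)); first by rewrite -{2}(divnK bn) dvdn_mulr.
    exact: cmn.
  have mq0 : (0 < m %/ a)%N by rewrite divn_gt0 // dvdn_leq.
  have nq0 : (0 < n %/ b)%N by rewrite divn_gt0 // dvdn_leq.
  rewrite e fM //.
  have [/andP[/eqP -> /eqP ->]|ne] := boolP ((a == m) && (b == n)).
    rewrite !divnn m0 n0 f1 /X (_ : true%:R = 1) //; ring.
  have cab : coprime a b.
    apply: (coprime_dvdl (n := m)) => //.
    exact: (coprime_dvdr (n := n)).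
  have lt : (a * b < m * n)%N.
    have := dvdn_leq m0 am; have := dvdn_leq n0 bn.
    move: ne; rewrite negb_and => /orP[] /eqP ne' le1 le2; nia.
  rewrite IH //; last by rewrite -ltnS (leq_trans lt).
  rewrite mul0r addr0; ring.
rewrite big_seq; under eq_bigr => a am.
  rewrite big_seq; under eq_bigr => b bn do rewrite key //.
  rewrite big_split /=; over.
rewrite big_split /=.
rewrite -big_seq.
under eq_bigr => a _ do rewrite -big_seq -big_distrr /=.
rewrite -big_distrl /= zero // mul0r add0r.
rewrite -big_seq; under eq_bigr => a _ do rewrite -big_seq.
rewrite (bigD1_seq m) ?divisors_id ?divisors_uniq //= eqxx.
rewrite [X in _ + X]big1 ?addr0; last first.
  move=> a /negbTE ->; rewrite big1 // => b _; by rewrite mul0r.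
rewrite (bigD1_seq n) ?divisors_id ?divisors_uniq //= eqxx mul1r.
rewrite [X in _ + X]big1 ?addr0; last by move=> b /negbTE ->; rewrite mul0r.
by move=> /eqP; rewrite /X subr_eq0 => /eqP.
Qed.

Lemma pow3_aux x : ((x + 4) * ((x + 4) * (x + 4)) <= 3 * ((x + 3) * ((x + 3) * (x + 3))))%N.
Proof. nia. Qed.

Lemma pow3_ge x : (x ^ 3 <= 3 ^ x)%N.
Proof.
case: x => [|[|[|x]]] //.
elim: x => [|x IH] //.
rewrite [(3 ^ _)%N]expnS.
apply: leq_trans (leq_mul (leqnn 3) IH).
rewrite !(expnS _ 2) !(expnS _ 1) !expn1.
by have := pow3_aux x; rewrite !addn4 !addn3.
Qed.

Definition alpha (R : realType) (A c : R) : R :=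
  3 * ln c / ln 3 + ln (1 + A) / ln 2.
Arguments alpha {R}.

Lemma key_ineq (R : realType) (A c : R) (x i : nat) :
  0 < A -> 0 < c -> c < 1 -> (1 <= x)%N -> (2 ^ i <= x)%N ->
  (1 + A) ^+ i * c ^+ x <= x%:R `^ alpha A c.
Proof.
move=> A0 c0 c1 x1 ix.
have x0 : (0 : R) < x%:R by rewrite ltr0n.
have A1 : 0 < 1 + A by lra.
rewrite /powR (negbTE (lt0r_neq0 x0)).
rewrite -[(1 + A) ^+ i]lnK ?posrE ?exprn_gt0 //.
rewrite -[c ^+ x]lnK ?posrE ?exprn_gt0 //.
rewrite -expRD ler_expR !lnXn //.
have l3 : 0 < ln (3 : R) by apply: ln_gt0; lra.
have l2 : 0 < ln (2 : R) by apply: ln_gt0; lra.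
have lc : ln c < 0 by apply: ln_lt0; rewrite c0 c1.
have lA : 0 < ln (1 + A) by apply: ln_gt0; lra.
have F1 : 3 * ln (x%:R : R) <= ln 3 * x%:R.
  have h1 : ln ((x ^ 3)%N%:R : R) <= ln ((3 ^ x)%N%:R : R).
    rewrite ler_ln; first by rewrite ler_nat pow3_ge.
      by rewrite posrE ltr0n expn_gt0 x1.
    by rewrite posrE ltr0n expn_gt0.
  move: h1; rewrite !natrX lnXn; last by rewrite ltr0n.
  rewrite lnXn; last by [].
  by rewrite mulr_natl mulr_natr.
have F2 : ln 2 * i%:R <= ln (x%:R : R).
  have h1 : ln ((2 ^ i)%N%:R : R) <= ln (x%:R : R).
    rewrite ler_ln; first by rewrite ler_nat.
      by rewrite posrE ltr0n expn_gt0.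
    by rewrite posrE ltr0n.
  by move: h1; rewrite natrX lnXn ?ltr0n // mulr_natr.
rewrite /alpha mulrDl addrC.
apply: lerD.
  rewrite -[ln c *+ x]mulr_natr mulrAC ler_pdivlMr //.
  nra.
rewrite -[ln _ *+ i]mulr_natr mulrAC ler_pdivlMr //.
nra.
Qed.

Lemma geom (R : realType) (A : R) k : 0 < A ->
  A * \sum_(0 <= j < k) ((1 + A)^-1) ^+ (k - j) <= 1.
Proof.
move=> A0; elim: k => [|k IH]; first by rewrite big_geq // mulr0 ler01.
rewrite big_nat_recr //= subSnn expr1.
rewrite (eq_big_nat _ _ (F2 := fun j => (1 + A)^-1 * ((1 + A)^-1) ^+ (k - j))); last first.
  by move=> j /andP[_ jk]; rewrite subSn ?exprS // ltnW.
rewrite -big_distrr /=.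
set S := \sum_(0 <= j < k) _ in IH *.
have A1 : 1 + A != 0 by rewrite lt0r_neq0 //; lra.
have q0 : 0 < (1 + A)^-1 by rewrite invr_gt0; lra.
have -> : A * ((1 + A)^-1 * S + (1 + A)^-1) = (1 + A)^-1 * (A * S + A) by ring.
apply: (le_trans (y := (1 + A)^-1 * (1 + A))); last by rewrite mulVf.
rewrite ler_pM2l //; lra.
Qed.

Lemma h_mul (R : realType) (al : R) a b :
  (a * b)%N%:R `^ al = a%:R `^ al * b%:R `^ al.
Proof. by rewrite natrM powRM // ler0n. Qed.

Lemma h_exp (R : realType) (al : R) p j :
  (p ^ j)%N%:R `^ al = (p%:R `^ al) ^+ j.
Proof.
elim: j => [|j IH]; first by rewrite expn0 expr0 powR1.
by rewrite expnS h_mul IH exprS.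
Qed.

Lemma expn_gt0_ p k : (0 < p)%N -> (0 < p ^ k)%N.
Proof. by move=> p0; rewrite expn_gt0 p0. Qed.

Lemma pp_bound (R : realType) (f g : nat -> R) (A c : R) p :
  multiplicative_fn f ->
  0 < A -> 0 < c -> c < 1 ->
  (forall n : nat, (2 <= n)%N -> `|f n| <= A * c ^+ n) ->
  dirichlet_inverse f g -> prime p ->
  forall k, `|g (p ^ k)%N| <= (p%:R `^ alpha A c) ^+ k.
Proof.
move=> [f1 fM] A0 c0 c1 fb H pp.
have p1 := prime_gt1 pp; have p0 := prime_gt0 pp.
set Hp := p%:R `^ alpha A c.
have Hp0 : 0 <= Hp by apply: powR_ge0.
elim/ltn_ind => k IH.
case: k IH => [|K] IH.
  by rewrite expn0 expr0 (@inv_one R f g f1 H) normr1.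
have E := H (p ^ K.+1)%N (@expn_gt0_ p K.+1 p0).
move: E; rewrite (perm_big _ (divisors_pexp_perm p K.+1 pp)) big_map.
have -> : (p ^ K.+1 == 1)%N = false.
  by apply/negbTE; rewrite -[X in (_ != X)%N](expn0 p) eqn_exp2l.
have -> : iota 0 K.+2 = index_iota 0 K.+2 by rewrite /index_iota subn0.
rewrite big_nat_recr //= divnn expn_gt0 p0 /= f1 mul1r.
move/eqP; rewrite addrC addr_eq0 => /eqP ->; rewrite normrN.
apply: le_trans (ler_norm_sum _ _ _) _.
apply: (le_trans (y := \sum_(0 <= j < K.+1) A * ((1 + A)^-1) ^+ (K.+1 - j) * Hp ^+ K.+1)).
  rewrite big_nat [X in _ <= X]big_nat; apply: ler_sum => j /andP[_ jK].
  set i := (K.+1 - j)%N.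
  have i0 : (0 < i)%N by rewrite subn_gt0.
  rewrite -(expnB p0 (ltnW jK)) -/i normrM.
  have x2 : (2 <= p ^ i)%N.
    apply: leq_trans p1 _; rewrite -{1}(expn1 p); exact: leq_pexp2l.
  have kk := @key_ineq R A c (p ^ i)%N i A0 c0 c1 (ltnW x2).
  rewrite (leq_exp2r _ _ i0) in kk.
  have {kk} kk := kk p1; rewrite h_exp -/Hp in kk.
  have A1 : 0 < 1 + A by lra.
  have cx : c ^+ (p ^ i) <= Hp ^+ i * ((1 + A)^-1) ^+ i.
    rewrite exprVn ler_pdivlMr ?exprn_gt0 // mulrC; exact: kk.
  have -> : Hp ^+ K.+1 = Hp ^+ i * Hp ^+ j by rewrite -exprD subnK // ltnW.
  rewrite mulrA; apply: ler_pM; rewrite ?normr_ge0 //.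
    apply: le_trans (fb _ x2) _.
    have -> : A * (1 + A)^-1 ^+ i * Hp ^+ i = A * (Hp ^+ i * (1 + A)^-1 ^+ i) by ring.
    by rewrite ler_pM2l.
  exact: IH.
rewrite -big_distrl /= -big_distrr /=.
by apply: ler_piMl; [apply: exprn_ge0 | apply: geom].
Qed.

Lemma bound_all (R : realType) (f g : nat -> R) (A c : R) :
  multiplicative_fn f ->
  0 < A -> 0 < c -> c < 1 ->
  (forall n : nat, (2 <= n)%N -> `|f n| <= A * c ^+ n) ->
  dirichlet_inverse f g ->
  forall n, (0 < n)%N -> `|g n| <= n%:R `^ alpha A c.
Proof.
move=> fm A0 c0 c1 fb H.
have [f1 fM] := fm.
elim/ltn_ind => n IH n0.
have [->|n1] := eqVneq n 1%N.
  by rewrite (@inv_one R f g f1 H) normr1 powR1.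
have n2 : (1 < n)%N by case: n n0 n1 IH => [|[|n]].
have pp := pdiv_prime n2.
set p := pdiv n in pp.
have [m cop e] := pfactor_coprime pp n0.
set k := logn p n in e.
have k0 : (0 < k)%N by rewrite logn_gt0 mem_primes pp n0 pdiv_dvd.
have m0 : (0 < m)%N by move: n0; rewrite e muln_gt0 => /andP[].
have pk := @pp_bound R f g A c p fm A0 c0 c1 fb H pp k.
rewrite e h_mul h_exp.
have [m1|m1] := eqVneq m 1%N.
  by rewrite m1 mul1n powR1 mul1r.
have cm : coprime m (p ^ k) by rewrite coprime_sym coprimeXl.
rewrite (@inv_mult R f g fm H m (p ^ k)%N m0 (expn_gt0_ p k (prime_gt0 pp)) cm) normrM.
apply: ler_pM; rewrite ?normr_ge0 //.
apply: (IH m _ m0); rewrite e ltn_Pmulr //.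
apply: leq_trans (prime_gt1 pp) _; rewrite -{1}(expn1 p); exact: leq_pexp2l (prime_gt0 pp) k0.
Qed.

Theorem corollary3p7 (R : realType) (f finv : nat -> R) (A c : R) :
  multiplicative_fn f ->
  0 < A -> 0 < c -> c < 1 ->
  (forall n : nat, (2 <= n)%N -> `|f n| <= A * c ^+ n) ->
  dirichlet_inverse f finv ->
  forall n : nat, (2 <= n)%N ->
    `|finv n| <= (n%:R) `^ (3 * ln c / ln 3 + ln (1 + A) / ln 2).
Proof.
move=> fm A0 c0 c1 fb H n n2.
exact: (@bound_all R f finv A c fm A0 c0 c1 fb H n (ltnW n2)).
Qed.
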